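(* Let $q\ge2$, $b\ge2$, $t\ge1$ and $n\ge(t+1)b-1$. Let $\boldsymbol{x}=0^b\circ\boldsymbol{X}^1_{n-b,q,b}$ and $\boldsymbol{y}=0^{b-1}1\circ\boldsymbol{X}^1_{n-b,q,b}$ (so $\boldsymbol{x}=\boldsymbol{X}^0_{n,q,b}$ and $\boldsymbol{y}$ differs from $\boldsymbol{x}$ only in its $b$-th entry). Then \[ |\mathcal{D}_{t,b}(\boldsymbol{x})\cap\mathcal{D}_{t,b}(\boldsymbol{y})|=D_{q,b}(n,t)-D_{q,b}(n-b,t)+D_{q,b}(n-(q+1)b,t-q). \] In particular, $N^-_{q,b}(n,t)\ge D_{q,b}(n,t)-D_{q,b}(n-b,t)+D_{q,b}(n-(q+1)b,t-q)$.
   Context: $\Sigma_q=\{0,\ldots,q-1\}$; $\alpha^k$ denotes $k$ copies of $\alpha$, $\circ$ is concatenation. A $b$-burst-deletion at position $i\in[1,n-b+1]$ transforms $x_1\cdots x_n$ into $x_1\cdots x_{i-1}x_{i+b}\cdots x_n$. For $n\ge tb+1$, $t\ge0$, $\mathcal{D}_{t,b}(\boldsymbol{x})$ is the set of all length-$(n-tb)$ sequences obtainable from $\boldsymbol{x}$ by $t$ successive $b$-burst-deletions. The $b$-cyclic sequence $\boldsymbol{X}^{\sigma}_{m,q,b}=X_1\cdots X_m$ has $X_i\equiv\sigma+\lfloor (i-1)/b\rfloor\pmod q$. For $m\ge bs+1$, $s\ge0$: $D_{q,b}(m,s)=\max\{|\mathcal{D}_{s,b}(\boldsymbol{z})|:\boldsymbol{z}\in\Sigma_q^m\}$;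 conventions $D_{q,b}(m,s)=1$ if $m=bs\ge0$, $D_{q,b}(m,s)=0$ if $m<bs$ or $s<0$. $N^-_{q,b}(n,t)=\max\{|\mathcal{D}_{t,b}(\boldsymbol{u})\cap\mathcal{D}_{t,b}(\boldsymbol{v})|:\boldsymbol{u}\ne\boldsymbol{v}\in\Sigma_q^n\}$. *)

(* Defs.v *)
(* Sequences over Sigma_q are represented as seq nat
   (entries < q); the maxima range over tuples of 'I_q. *)
From mathcomp Require Import all_boot all_order all_algebra.
Set Implicit Arguments. Unset Strict Implicit. Unset Printing Implicit Defensive.
Import Order.TTheory GRing.Theory Num.Theory.

Definition bdel (b i : nat) (x : seq nat) : seq nat := take i x ++ drop (i + b) x.

Fixpoint Dset (b t : nat) (x : seq nat) : seq (seq nat) :=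
  match t with
  | 0 => [:: x]
  | t'.+1 =>
      if b <= size x then
        undup (flatten [seq Dset b t' (bdel b i x) | i <- iota 0 (size x - b).+1])
      else [::]
  end.

(* b-cyclic sequence X^sigma_{m,q,b}: X_i = sigma + floor((i-1)/b) mod q,
   i = 1..m (here 0-indexed). *)
Definition cycseq (sigma m q b : nat) : seq nat :=
  mkseq (fun i => (sigma + i %/ b) %% q) m.

(* D_{q,b}(m,s), with the paper's conventions for m <= b s or s < 0. *)
Definition Dmax (q b : nat) (m s : int) : nat :=
  if (s < 0)%R then 0
  else if (m < (b%:Z * s))%R then 0
  else if m == (b%:Z * s)%R then 1
  else \max_(z : (absz m).-tuple 'I_q) size (Dset b (absz s) (map val z)).

Definition Dint (b t : nat) (u v : seq nat) : nat :=
  size [seq w <- Dset b t u | w \in Dset b t v].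

Definition Nminus (q b n t : nat) : nat :=
  \max_(u : n.-tuple 'I_q) \max_(v : n.-tuple 'I_q | u != v)
     Dint b t (map val u) (map val v).

(* Main.v *)
Require Import Defs.
From mathcomp Require Import all_boot all_order all_algebra.
From mathcomp Require Import zify.
Import Order.TTheory GRing.Theory Num.Theory.

Module Aux.
Set Implicit Arguments. Unset Strict Implicit.


Lemma Dset_uniq b t w : uniq (Dset b t w).
Proof. case: t => [|t] //=; case: ifP => // _; exact: undup_uniq. Qed.

Lemma size_bdel b i w : b <= size w -> i <= size w - b -> size (bdel b i w) = size w - b.
Proof. move=> h1 h2; rewrite /bdel size_cat size_take size_drop; case: ifP; lia. Qed.

Lemma Dset_S b t w : Dset b t.+1 w = if b <= size w then
  undup (flatten [seq Dset b t (bdel b i w) | i <- iota 0 (size w - b).+1]) else [::].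
Proof. by []. Qed.

Lemma Dset_stepP b t w y : y \in Dset b t.+1 w ->
  exists i, [/\ b <= size w, i <= size w - b & y \in Dset b t (bdel b i w)].
Proof.
rewrite Dset_S; case: ifP => hb; last by [].
rewrite mem_undup; case/flatten_mapP => i hi hy; move: hi; rewrite mem_iota => /andP [_ hi].
exists i; split => //; lia.
Qed.

Lemma Dset_step b t w i y : b <= size w -> i <= size w - b ->
  y \in Dset b t (bdel b i w) -> y \in Dset b t.+1 w.
Proof.
move=> hb hi hy; rewrite Dset_S hb mem_undup; apply/flatten_mapP; exists i => //.
rewrite mem_iota; lia.
Qed.

Lemma Dset_size b t w y : y \in Dset b t w -> t * b <= size w /\ size y = size w - t * b.
Proof.
elim: t w y => [|t IH] w y.
  by rewrite inE => /eqP ->; rewrite mul0n subn0.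
move/Dset_stepP => [i [hb hi /IH]]; rewrite size_bdel // => -[h1 h2]; split; lia.
Qed.

Lemma Dset_small b t w : size w < t * b -> Dset b t w = [::].
Proof.
move=> h; case E: (Dset b t w) => [|y s] //.
have: y \in Dset b t w by rewrite E mem_head.
move/Dset_size => [h1 _]; lia.
Qed.

Lemma Dset_comp b j s w z y : z \in Dset b j w -> y \in Dset b s z -> y \in Dset b (j + s) w.
Proof.
elim: j w => [|j IH] w.
  by rewrite inE => /eqP ->.
move/Dset_stepP => [i [hb hi hz]] hy.
rewrite addSn; apply: (Dset_step hb hi); exact: IH hz hy.
Qed.

Lemma Dset_pref b j p z : size p = j * b -> z \in Dset b j (p ++ z).
Proof.
elim: j p => [|j IH] p hp.
  by move: hp; rewrite mul0n => /size0nil ->; rewrite inE.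
have hb : b <= size (p ++ z) by rewrite size_cat; lia.
apply: (Dset_step (i:=0) hb) => //.
rewrite /bdel take0 /= add0n drop_cat; case: ifP => h.
  apply: IH; rewrite size_drop; lia.
have -> : b - size p = 0 by lia.
rewrite drop0; apply: (IH [::]) => /=; lia.
Qed.

Lemma Dset_cons b s z y a : y \in Dset b s z -> a :: y \in Dset b s (a :: z).
Proof.
elim: s z y => [|s IH] z y.
  by rewrite !inE => /eqP ->.
move/Dset_stepP => [i [hb hi hy]].
have hb' : b <= size (a :: z) by rewrite /=; lia.
apply: (Dset_step (i:=i.+1) hb'); first by rewrite /=; lia.
by have := IH _ _ hy; rewrite /bdel /=.
Qed.


Lemma drop_bdel_lt b j i w : j <= i -> drop j (bdel b i w) = bdel b (i - j) (drop j w).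
Proof.
elim: j i w => [|j IH] i w hji; first by rewrite subn0 !drop0.
case: i hji => [|i] // hji; case: w => [|a w].
  by rewrite /bdel.
by have := IH i w hji; rewrite /bdel subSS.
Qed.

Lemma size_take_le (w : seq nat) i : i <= size w -> size (take i w) = i.
Proof. by move=> h; rewrite size_take; case: ifP => //; lia. Qed.

Lemma drop_bdel_ge b p i w : i <= p -> i <= size w -> drop p (bdel b i w) = drop (p + b) w.
Proof.
move=> h1 h2; rewrite /bdel drop_cat size_take_le //.
have -> : (p < i) = false by lia.
by rewrite drop_drop; congr drop; lia.
Qed.

Lemma nth_bdel_ge b p i w : i <= p -> i <= size w -> nth 0 (bdel b i w) p = nth 0 w (p + b).
Proof.
move=> h1 h2; rewrite /bdel nth_cat size_take_le //.
have -> : (p < i) = false by lia.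
by rewrite nth_drop; congr nth; lia.
Qed.

Lemma nth_bdel_lt b p i w : p < i -> nth 0 (bdel b i w) p = nth 0 w p.
Proof.
move=> h; rewrite /bdel; case: (ltnP p (size w)) => hp.
  rewrite nth_cat ifT ?nth_take // size_take; case: ifP; lia.
rewrite !nth_default // size_cat size_take size_drop; case: ifP; lia.
Qed.

Lemma Dset_cons_inv b t w a y : a :: y \in Dset b t w -> exists k,
  [/\ k <= t, k * b < size w, nth 0 w (k * b) = a & y \in Dset b (t - k) (drop (k * b).+1 w)].
Proof.
elim: t w y => [|t IH] w y.
  rewrite inE => /eqP <-; exists 0; split => //=; by rewrite drop0 inE.
move/Dset_stepP => [i [hb hi /IH [k [hk hks hkn hky]]]].
move: hks; rewrite size_bdel // => hks.
case: (leqP i (k * b)) => hik.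
  exists k.+1; split.
  - lia.
  - rewrite mulSn; lia.
  - by rewrite -hkn nth_bdel_ge //; [congr nth; rewrite mulSn; lia | lia].
  - move: hky; rewrite drop_bdel_ge; [|lia|lia].
    have -> : (k * b).+1 + b = (k.+1 * b).+1 by rewrite mulSn; lia.
    by rewrite subSS.
exists k; split.
- lia.
- lia.
- by rewrite -hkn nth_bdel_lt.
- move: hky; rewrite drop_bdel_lt // => hky.
  have -> : t.+1 - k = (t - k).+1 by lia.
  apply: (Dset_step _ _ hky); rewrite size_drop; lia.
Qed.

Lemma Dset_cons_intro b t w k a y : k <= t -> k * b < size w -> nth 0 w (k * b) = a ->
  y \in Dset b (t - k) (drop (k * b).+1 w) -> a :: y \in Dset b t w.
Proof.
move=> hk hks hkn hy.
have -> : w = take (k * b) w ++ a :: drop (k * b).+1 w.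
  by rewrite -hkn -drop_nth // cat_take_drop.
have -> : t = k + (t - k) by lia.
apply: (Dset_comp (z := a :: drop (k * b).+1 w)).
  apply: Dset_pref; rewrite size_take_le //; lia.
exact: Dset_cons.
Qed.

Lemma Dset_first b t w k y : k <= t -> k * b < size w ->
  (forall j, j < k -> nth 0 w (j * b) != nth 0 w (k * b)) ->
  (nth 0 w (k * b) :: y \in Dset b t w) = (y \in Dset b (t - k) (drop (k * b).+1 w)).
Proof.
move=> hk hks hfirst; apply/idP/idP; last exact: Dset_cons_intro.
case/Dset_cons_inv => k' [hk' hks' hn hy].
have hkk : k <= k'.
  rewrite leqNgt; apply/negP => hlt; have := hfirst _ hlt; by rewrite hn eqxx.
have -> : drop (k * b).+1 w = take ((k' - k) * b) (drop (k * b).+1 w) ++ drop (k' * b).+1 w.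
  rewrite -{1}(cat_take_drop ((k' - k) * b) (drop (k * b).+1 w)) drop_drop.
  have hkb : k * b <= k' * b by rewrite leq_mul2r hkk orbT.
  by congr (_ ++ drop _ w); rewrite mulnBl; lia.
have -> : t - k = (k' - k) + (t - k') by lia.
apply: Dset_comp hy; apply: Dset_pref.
have hkb : k * b <= k' * b by rewrite leq_mul2r hkk orbT.
rewrite size_take_le // size_drop mulnBl; lia.
Qed.

Lemma Dset_none b t w a y : (forall k, k <= t -> k * b < size w -> nth 0 w (k * b) != a) ->
  a :: y \notin Dset b t w.
Proof.
move=> h; apply/negP => /Dset_cons_inv [k [hk hks hn _]].
by have := h _ hk hks; rewrite hn eqxx.
Qed.

Lemma Dset_nil b t w : ([::] \in Dset b t w) = (size w == t * b).
Proof.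
apply/idP/eqP.
  move/Dset_size => [h1 h2]; move: h2 => /= h2; lia.
move=> h; have := @Dset_pref b t w [::] h; by rewrite cats0.
Qed.


Lemma eq_uniq_size (T : eqType) (s1 s2 : seq T) : uniq s1 -> uniq s2 -> s1 =i s2 -> size s1 = size s2.
Proof. by move=> u1 u2 e; apply: perm_size; apply: uniq_perm. Qed.

Lemma split_size (L : seq (seq nat)) (S : seq nat) (T : nat -> seq (seq nat)) :
  uniq L -> [::] \notin L -> uniq S -> (forall a y, a :: y \in L -> a \in S) ->
  (forall a, a \in S -> uniq (T a) /\ (forall y, (a :: y \in L) = (y \in T a))) ->
  size L = \sum_(a <- S) size (T a).
Proof.
elim: S L => [|a S IH] L uL nL uS hS hT.
  case: L uL nL hS {hT} => [|y L] _ nL hS; first by rewrite big_nil.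
  case: y nL hS => [|c y] nL hS; first by rewrite mem_head in nL.
  by have := hS c y (mem_head _ _).
move: uS => /= /andP [aS uS].
pose P := fun y : seq nat => head a.+1 y == a.
rewrite big_cons -(count_predC P) -!size_filter.
congr (_ + _).
  have [uT memT] := hT a (mem_head a S).
  have -> : size [seq x <- L | P x] = size (map behead [seq x <- L | P x]) by rewrite size_map.
  apply: eq_uniq_size => //.
    rewrite map_inj_in_uniq ?filter_uniq //.
    move=> [|c y] [|c' y']; rewrite !mem_filter /P /= => /andP [/eqP e1 _] /andP [/eqP e2 _] //=; try lia.
    by move=> ->; rewrite e1 e2.
  move=> y; rewrite -memT; apply/mapP/idP.
    move=> [[|c z]]; rewrite mem_filter /P /= => /andP [/eqP e hz]; first lia.
    by move=> ->; rewrite -e.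
  by move=> hy; exists (a :: y) => //; rewrite mem_filter /P /= eqxx.
apply: IH.
- exact: filter_uniq.
- by rewrite mem_filter negb_and nL orbT.
- exact: uS.
- move=> c y; rewrite mem_filter /= /P /= => /andP [hca /hS].
  by rewrite inE (negbTE hca).
- move=> c hc; have [uT memT] := hT c (mem_behead (s:=a::S) hc).
  split => // y; rewrite mem_filter /P /= memT.
  have -> : (c == a) = false by apply/eqP => e; move: aS; rewrite -e hc.
  by [].
Qed.


Definition fk b t (w : seq nat) a := find (fun k => nth 0 w (k * b) == a) (iota 0 t.+1).

Definition Tg b t w a :=
  if fk b t w a <= t then Dset b (t - fk b t w a) (drop (fk b t w a * b).+1 w) else [::].

Lemma Dset_nonil b t w : t * b < size w -> [::] \notin Dset b t w.
Proof. by move=> h; rewrite Dset_nil; apply/negP => /eqP; lia. Qed.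

Lemma size_Dset_gen q b t w : t * b < size w -> all (fun x => x < q) w ->
  size (Dset b t w) = \sum_(a <- iota 0 q) size (Tg b t w a).
Proof.
move=> hs hall; apply: split_size.
- exact: Dset_uniq.
- exact: Dset_nonil.
- exact: iota_uniq.
- move=> a y /Dset_cons_inv [k [hk hks hn _]]; rewrite mem_iota /= add0n -hn.
  by move/allP: hall; apply; apply: mem_nth.
move=> a _; split; first by rewrite /Tg; case: ifP => // _; exact: Dset_uniq.
move=> y; rewrite /Tg; case: ifP => hf.
  have hhas : has (fun k => nth 0 w (k * b) == a) (iota 0 t.+1) by rewrite has_find size_iota.
  have := nth_find 0 hhas; rewrite -/(fk b t w a) nth_iota // => /eqP hn.
  rewrite -{1}hn Dset_first //.
  - have : fk b t w a * b <= t * b by rewrite leq_mul2r hf orbT.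
    lia.
  - move=> j hj; rewrite hn; have := before_find 0 hj; rewrite nth_iota; last first.
      by apply: (leq_trans hj); lia.
    by move=> ->.
rewrite in_nil; apply/negbTE/Dset_none => k hk hks.
have : ~~ has (fun k => nth 0 w (k * b) == a) (iota 0 t.+1).
  by rewrite has_find size_iota; move: hf; rewrite /fk; lia.
move/hasPn => /(_ k); rewrite mem_iota; apply; lia.
Qed.

Definition cycS q c m := [seq (c + k) %% q | k <- iota 0 m].

Lemma cycS_uniq q c m : m <= q -> uniq (cycS q c m).
Proof.
move=> hm; rewrite map_inj_in_uniq ?iota_uniq //.
move=> i j; rewrite !mem_iota /= !add0n => hi hj /eqP.
rewrite eqn_modDl !modn_small; [by move/eqP| lia | lia].
Qed.

Lemma cyc_mem q b c t w : 0 < q ->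
  (forall k, k <= t -> nth 0 w (k * b) = (c + k) %% q) -> t * b < size w ->
  (forall a y, a :: y \in Dset b t w -> a \in cycS q c (minn q t.+1)) /\
  (forall k y, k < minn q t.+1 ->
     ((c + k) %% q :: y \in Dset b t w) = (y \in Dset b (t - k) (drop (k * b).+1 w))).
Proof.
move=> hq hh hs; split.
  move=> a y /Dset_cons_inv [k [hk hks hn _]]; rewrite -hn hh //.
  apply/mapP; exists (k %% q); last by rewrite modnDmr.
  rewrite mem_iota /= add0n; have := ltn_pmod k hq; have := leq_mod k q; lia.
move=> k y hk.
have hkt : k <= t by lia.
have hkb : k * b <= t * b by rewrite leq_mul2r hkt orbT.
rewrite -hh // Dset_first //; first lia.
move=> j hj; rewrite !hh; try lia.
apply/eqP => /eqP; rewrite eqn_modDl !modn_small; [move/eqP; lia| lia | lia].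
Qed.

Lemma size_cyc q b c t w : 0 < q ->
  (forall k, k <= t -> nth 0 w (k * b) = (c + k) %% q) -> t * b < size w ->
  size (Dset b t w) = \sum_(k <- iota 0 (minn q t.+1)) size (Dset b (t - k) (drop (k * b).+1 w)).
Proof.
move=> hq hh hs; have [hS hT] := cyc_mem hq hh hs.
set m := minn q t.+1.
pose T a := Dset b (t - index a (cycS q c m)) (drop ((index a (cycS q c m)) * b).+1 w).
have uS : uniq (cycS q c m) by apply: cycS_uniq; lia.
have idx : forall k, k < m -> index ((c + k) %% q) (cycS q c m) = k.
  move=> k hk; have := @index_uniq _ 0 k (cycS q c m); rewrite size_map size_iota.
  by rewrite (nth_map 0) ?size_iota // nth_iota //; apply.
rewrite (@split_size _ (cycS q c m) T).
- rewrite big_map; apply: eq_big_seq => k; rewrite mem_iota /= add0n => hk.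
  by rewrite /T idx.
- exact: Dset_uniq.
- exact: Dset_nonil.
- exact: uS.
- exact: hS.
move=> a /mapP [k]; rewrite mem_iota /= add0n => hk ->; split; first exact: Dset_uniq.
by move=> y; rewrite hT // /T idx.
Qed.

Lemma int_cyc q b c t u v : 0 < q ->
  (forall k, k <= t -> nth 0 u (k * b) = (c + k) %% q) -> t * b < size u ->
  (forall k, k <= t -> nth 0 v (k * b) = (c + k) %% q) -> t * b < size v ->
  Dint b t u v = \sum_(k <- iota 0 (minn q t.+1))
     Dint b (t - k) (drop (k * b).+1 u) (drop (k * b).+1 v).
Proof.
move=> hq hu hsu hv hsv; have [hS hT] := cyc_mem hq hu hsu; have [_ hT'] := cyc_mem hq hv hsv.
set m := minn q t.+1.
pose idx a := index a (cycS q c m).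
pose T a := [seq y <- Dset b (t - idx a) (drop (idx a * b).+1 u) |
               y \in Dset b (t - idx a) (drop (idx a * b).+1 v)].
have uS : uniq (cycS q c m) by apply: cycS_uniq; lia.
have hidx : forall k, k < m -> idx ((c + k) %% q) = k.
  move=> k hk; have := @index_uniq _ 0 k (cycS q c m); rewrite size_map size_iota.
  by rewrite (nth_map 0) ?size_iota // nth_iota //; apply.
rewrite /Dint (@split_size _ (cycS q c m) T).
- rewrite big_map; apply: eq_big_seq => k; rewrite mem_iota /= add0n => hk.
  by rewrite /T hidx.
- exact/filter_uniq/Dset_uniq.
- by rewrite mem_filter negb_and Dset_nonil.
- exact: uS.
- by move=> a y; rewrite mem_filter => /andP [_ /hS].
move=> a /mapP [k]; rewrite mem_iota /= add0n => hk ->; split.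
  exact/filter_uniq/Dset_uniq.
by move=> y; rewrite /T mem_filter hT // hT' // hidx // mem_filter andbC.
Qed.


Definition F q b c d m := mkseq (fun i => (c + (d + i) %/ b) %% q) m.

Lemma size_F q b c d m : size (F q b c d m) = m.
Proof. exact: size_mkseq. Qed.

Lemma nth_F q b c d m i : i < m -> nth 0 (F q b c d m) i = (c + (d + i) %/ b) %% q.
Proof. by move=> h; rewrite /F nth_mkseq. Qed.

Lemma cycseq_F c m q b : cycseq c m q b = F q b c 0 m.
Proof. by []. Qed.

Lemma drop_F q b c d m e : drop e (F q b c d m) = F q b c (d + e) (m - e).
Proof.
apply: (@eq_from_nth _ 0); first by rewrite size_drop !size_F.
move=> i; rewrite size_drop size_F => hi.
by rewrite nth_drop !nth_F; [congr (_ %% q); congr (c + _ %/ b); lia | lia | lia].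
Qed.

Lemma F_norm q b c d m : 0 < b -> F q b c d m = F q b (c + d %/ b) (d %% b) m.
Proof.
move=> hb; apply: eq_mkseq => i.
have e : (d + i) %/ b = d %/ b + (d %% b + i) %/ b.
  by rewrite {1}(divn_eq d b) -addnA divnMDl.
by rewrite e addnA.
Qed.

Lemma F_heads q b c d m t : 0 < b -> d < b -> t * b < m ->
  forall k, k <= t -> nth 0 (F q b c d m) (k * b) = (c + k) %% q.
Proof.
move=> hb hd hm k hk; rewrite nth_F; last first.
  have : k * b <= t * b by rewrite leq_mul2r hk orbT.
  lia.
by rewrite (addnC d) divnMDl // divn_small // addn0.
Qed.

Lemma F_all q b c d m : 0 < q -> all (fun x => x < q) (F q b c d m).
Proof. by move=> hq; apply/allP => x /mapP [i _ ->]; exact: ltn_pmod. Qed.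

Lemma size_Dset_eq b t w : size w = t * b -> size (Dset b t w) = 1.
Proof.
move=> h; rewrite (@eq_uniq_size _ _ [:: [::]]) //; first exact: Dset_uniq.
move=> y; rewrite inE; apply/idP/eqP.
  by move/Dset_size => [_]; rewrite h subnn => /size0nil.
by move=> ->; rewrite Dset_nil h.
Qed.

Definition g q b m t := size (Dset b t (F q b 0 0 m)).

Lemma fam q b m : 0 < q -> 0 < b -> forall c d t, size (Dset b t (F q b c d m)) = g q b m t.
Proof.
move=> hq hb; elim/ltn_ind: m => m IH c d t.
rewrite /g; case: (ltngtP m (t * b)) => hm.
- by rewrite !Dset_small // size_F.
- rewrite (@F_norm q b c d m hb).
  rewrite (size_cyc hq (F_heads _ _ hb (ltn_pmod d hb) hm)) ?size_F //.
  rewrite (size_cyc (c:=0) hq (F_heads _ _ hb hb hm)) ?size_F //.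
  apply: eq_big_seq => k; rewrite mem_iota /= add0n => hk.
  have hkb : k * b <= t * b by rewrite leq_mul2r orbC; apply/orP; left; lia.
  rewrite !drop_F (@F_norm q b _ (d %% b + _)) // (@F_norm q b _ (0 + _)) // !IH //; lia.
- by rewrite !size_Dset_eq // size_F.
Qed.

Lemma g_rec q b m t : 0 < q -> 0 < b -> t * b < m ->
  g q b m t = \sum_(k <- iota 0 (minn q t.+1)) g q b (m - (k * b).+1) (t - k).
Proof.
move=> hq hb hm; rewrite {1}/g (size_cyc (c:=0) hq (F_heads _ _ hb hb hm)) ?size_F //.
by apply: eq_big_seq => k _; rewrite drop_F fam.
Qed.

Lemma g_small q b m t : m < t * b -> g q b m t = 0.
Proof. by move=> h; rewrite /g Dset_small // size_F. Qed.

Lemma g_eq q b m t : m = t * b -> g q b m t = 1.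
Proof. by move=> h; rewrite /g size_Dset_eq // size_F. Qed.

Lemma g_mono q b m s : 0 < q -> 0 < b -> b <= m -> g q b (m - b) s <= g q b m s.+1.
Proof.
move=> hq hb hm; rewrite -(@fam q b (m - b) hq hb 0 b s) /g.
apply: uniq_leq_size; first exact: Dset_uniq.
move=> y hy; have e : F q b 0 b (m - b) = drop b (F q b 0 0 m) by rewrite drop_F.
rewrite e in hy.
have -> : s.+1 = 1 + s by [].
apply: (Dset_comp _ hy).
rewrite -{2}(cat_take_drop b (F q b 0 0 m)); apply: Dset_pref.
by rewrite size_take_le ?size_F // mul1n.
Qed.


Lemma sum_iota_split (h : nat -> nat) n : \sum_(k <- iota 0 n.+1) h k = \sum_(k <- iota 0 n) h k + h n.
Proof. by rewrite -addn1 iotaD big_cat big_seq1 add0n. Qed.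

Lemma sum_iota_mono (h : nat -> nat) n1 n2 : n1 <= n2 ->
  \sum_(k <- iota 0 n1) h k <= \sum_(k <- iota 0 n2) h k.
Proof.
move=> hn; rewrite -(subnKC hn) iotaD big_cat /=; exact: leq_addr.
Qed.

Lemma rearr (h : nat -> nat) n : (forall i j, i <= j -> j < n -> h j <= h i) ->
  forall K : seq nat, uniq K -> all (fun k => k < n) K ->
  \sum_(k <- K) h k <= \sum_(k <- iota 0 (size K)) h k.
Proof.
elim: n => [|n IH] hh K uK aK.
  by case: K aK uK => // k K /andP [].
have IH' := IH (fun i j hij hj => hh i j hij (ltnW hj)).
have hsz : size K <= n.+1.
  rewrite -(size_iota 0 n.+1); apply: uniq_leq_size => // x hx.
  by rewrite mem_iota /=; move/allP: aK => /(_ x hx).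
case hn: (n \in K).
  rewrite (perm_big _ (perm_to_rem hn)) big_cons.
  have hK0 : 0 < size K by move: hn; case: (K).
  have hs : size K = (size (rem n K)).+1.
    by rewrite size_rem // prednK.
  rewrite hs sum_iota_split addnC leq_add //.
    apply: hh; lia.
  apply: IH'; first exact: rem_uniq.
  apply/allP => x; rewrite mem_rem_uniq // inE => /andP [hx hxK].
  move/allP: aK => /(_ x hxK); lia.
apply: IH' => //; apply/allP => x hx; move/allP: aK => /(_ x hx).
rewrite ltnS leq_eqVlt => /orP [/eqP e|] //.
by move: hn; rewrite -e hx.
Qed.

Lemma fk_spec b t w a : fk b t w a <= t ->
  nth 0 w (fk b t w a * b) = a.
Proof.
move=> hf.
have hhas : has (fun k => nth 0 w (k * b) == a) (iota 0 t.+1) by rewrite has_find size_iota.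
by have := nth_find 0 hhas; rewrite -/(fk b t w a) nth_iota // => /eqP.
Qed.

Lemma mono_chain (h : nat -> nat) n : (forall k, k.+1 < n -> h k.+1 <= h k) ->
  forall i j, i <= j -> j < n -> h j <= h i.
Proof.
move=> hh i j; elim: j => [|j IH] hij hj.
  by have -> : i = 0 by lia.
case: (ltngtP i j.+1) => h1.
- apply: leq_trans (IH _ _); [apply: hh | lia | lia]; lia.
- lia.
- by rewrite h1.
Qed.

Lemma ub q b : 0 < q -> 0 < b -> forall m t w, size w = m -> all (fun x => x < q) w ->
  size (Dset b t w) <= g q b m t.
Proof.
move=> hq hb; elim/ltn_ind => m IH t w hw hall.
case: (ltngtP m (t * b)) => hm.
- by rewrite Dset_small // hw.
- pose h k := g q b (m - (k * b).+1) (t - k).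
  rewrite (size_Dset_gen (q:=q)) ?hw // g_rec //.
  apply: (@leq_trans (\sum_(a <- iota 0 q) (if fk b t w a <= t then h (fk b t w a) else 0))).
    apply: leq_sum => a _; rewrite /Tg; case: ifP => hf //.
    have hfb : fk b t w a * b <= t * b by rewrite leq_mul2r hf orbT.
    apply: IH; first lia.
      by rewrite size_drop hw.
    by apply/allP => x /mem_drop; move/allP: hall; apply.
  rewrite -big_mkcond -big_filter.
  set A := [seq a <- iota 0 q | fk b t w a <= t].
  rewrite -(big_map (fk b t w) xpredT h).
  set K := map (fk b t w) A.
  have uK : uniq K.
    rewrite map_inj_in_uniq ?filter_uniq ?iota_uniq //.
    move=> a a'; rewrite !mem_filter => /andP [ha _] /andP [ha' _] e.
    by rewrite -(fk_spec ha) -(fk_spec ha') e.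
  have aK : all (fun k => k < t.+1) K.
    by apply/allP => k /mapP [a]; rewrite mem_filter => /andP [ha _] ->.
  apply: leq_trans (rearr _ uK aK) _.
    apply: mono_chain => k hk; rewrite /h.
    have hkb : k.+1 * b <= t * b by rewrite leq_mul2r; apply/orP; right; lia.
    have -> : t - k = (t - k.+1).+1 by lia.
    have -> : m - (k.+1 * b).+1 = (m - (k * b).+1) - b by rewrite mulSn; lia.
    apply: g_mono => //; rewrite mulSn in hkb; lia.
  apply: sum_iota_mono; rewrite leq_min; apply/andP; split.
    by rewrite size_map size_filter; apply: leq_trans (count_size _ _) _; rewrite size_iota.
  rewrite -(size_iota 0 t.+1); apply: uniq_leq_size => // k hk.
  by rewrite mem_iota /=; move/allP: aK => /(_ k hk).
- by rewrite size_Dset_eq ?hw // g_eq.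
Qed.


Lemma tuple_of_seq q n (s : seq nat) : size s = n -> all (fun x => x < q) s ->
  exists u : n.-tuple 'I_q, map val u = s.
Proof.
elim: s n => [|x s IH] n /= hn; first by rewrite -hn => _; exists [tuple].
move/andP => [hx hs]; case: n hn => [|n] // [hn].
have [u hu] := IH n hn hs.
by exists [tuple of Ordinal hx :: u]; rewrite /= hu.
Qed.

Lemma Dmax_g q b m s : 0 < q -> 0 < b -> Dmax q b m%:Z s%:Z = g q b m s.
Proof.
move=> hq hb; rewrite /Dmax.
have -> : (s%:Z < 0)%R = false by [].
rewrite -PoszM ltz_nat eqz_nat.
case: ltngtP => hm.
- by rewrite g_small // mulnC.
- apply/eqP; rewrite eqn_leq; apply/andP; split.
    apply/bigmax_leqP => z _; apply: ub => //; first by rewrite size_map size_tuple.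
    by apply/allP => x /mapP [i _ ->]; exact: ltn_ord.
  have [u hu] := tuple_of_seq (@size_F q b 0 0 m) (@F_all q b 0 0 m hq).
  by rewrite /g -hu; apply: (leq_bigmax_cond (P := xpredT)).
- by rewrite g_eq // mulnC.
Qed.


Definition U q b N r := nseq r 0 ++ F q b 1 0 N.
Definition V q b N r := nseq r.-1 0 ++ 1 :: F q b 1 0 N.

Lemma U_F q b N r : 0 < b -> r <= b -> U q b N r = F q b 0 (b - r) (r + N).
Proof.
move=> hb hr; apply: (@eq_from_nth _ 0); first by rewrite size_cat size_nseq !size_F.
move=> i; rewrite size_cat size_nseq size_F => hi.
rewrite /U nth_cat size_nseq (@nth_F q b 0 (b - r) (r + N) i hi); case: ifP => h.
  by rewrite nth_nseq h divn_small ?mod0n //; lia.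
rewrite nth_F; last lia.
have -> : b - r + i = 1 * b + (i - r) by lia.
by rewrite divnMDl // add0n add0n.
Qed.

Lemma U_cons q b N r : U q b N r.+1 = 0 :: U q b N r.
Proof. by []. Qed.

Lemma V_cons q b N r : 0 < r -> V q b N r.+1 = 0 :: V q b N r.
Proof. by case: r. Qed.

Lemma UV_split q b N r : 0 < r -> U q b N r = nseq r.-1 0 ++ 0 :: F q b 1 0 N.
Proof.
case: r => // r _; rewrite /U /=; elim: r => [|r IH] //=; by rewrite IH.
Qed.

Lemma nth_UV q b N r i : 0 < r -> i != r.-1 -> nth 0 (V q b N r) i = nth 0 (U q b N r) i.
Proof.
move=> hr hi; rewrite UV_split // /V !nth_cat size_nseq; case: ifP => // h.
case E: (i - r.-1) => [|j] //; move/eqP: hi; lia.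
Qed.

Lemma drop_UV q b N r j : 0 < r -> r <= j -> drop j (V q b N r) = drop j (U q b N r).
Proof.
move=> hr hj; rewrite UV_split // /V !drop_cat size_nseq.
have -> : (j < r.-1) = false by lia.
case E: (j - r.-1) => [|k] //; lia.
Qed.

Lemma Dint_same b t A : Dint b t A A = size (Dset b t A).
Proof.
rewrite /Dint; congr size; rewrite -[RHS]filter_predT; apply: eq_in_filter => x ->. by [].
Qed.

Lemma size_filter_sub (L1 L2 : seq (seq nat)) : uniq L1 -> uniq L2 -> {subset L2 <= L1} ->
  size [seq y <- L1 | y \in L2] = size L2.
Proof.
move=> u1 u2 s; apply: eq_uniq_size; [exact: filter_uniq | by [] |].
move=> y; rewrite mem_filter; apply/andP/idP => [[] //|h]; split => //; exact: s.
Qed.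

Lemma size_filter_sup (L1 L2 : seq (seq nat)) : {subset L1 <= L2} ->
  size [seq y <- L1 | y \in L2] = size L1.
Proof. by move=> s; congr size; rewrite -[RHS]filter_predT; apply: eq_in_filter => x /s ->. Qed.

Lemma iota0S m : 0 < m -> iota 0 m = 0 :: iota 1 m.-1.
Proof. by case: m. Qed.

Lemma step_UV q b N t r : 0 < q -> 0 < b -> 1 < r -> r <= b -> t * b < r + N ->
  Dint b t (U q b N r) (V q b N r) + g q b (r.-1 + N) t =
  Dint b t (U q b N r.-1) (V q b N r.-1) + g q b (r + N) t.
Proof.
move=> hq hb hr hrb hs.
have hdu : b - r < b by lia.
have hU := F_heads q 0 hb hdu hs.
have hsU : t * b < size (U q b N r) by rewrite U_F ?size_F //; lia.
have hV : forall k, k <= t -> nth 0 (V q b N r) (k * b) = (0 + k) %% q.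
  move=> k hk; rewrite nth_UV; [|lia|].
    by rewrite U_F; [apply: hU| lia| lia].
  case: k hk => [|k] hk; first by apply/eqP; lia.
  by rewrite mulSn; apply/eqP; lia.
have hsV : t * b < size (V q b N r) by rewrite /V size_cat size_nseq /= size_F; lia.
have hU' : forall k, k <= t -> nth 0 (U q b N r) (k * b) = (0 + k) %% q.
  by move=> k hk; rewrite U_F; [apply: hU| lia| lia].
have eU : g q b (r + N) t = size (Dset b t (U q b N r)).
  by rewrite U_F ?fam //; lia.
have eU' : g q b (r.-1 + N) t = size (Dset b t (U q b N r.-1)).
  by rewrite U_F ?fam //; lia.
rewrite (int_cyc hq hU' hsU hV hsV) eU (size_cyc hq hU' hsU) eU'.
have hm : 0 < minn q t.+1 by rewrite leq_min hq.
rewrite (iota0S hm) !big_cons mul0n subn0.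
have er : r = r.-1.+1 by lia.
have e1 : drop 1 (U q b N r) = U q b N r.-1 by rewrite {1}er U_cons drop1.
have e2 : drop 1 (V q b N r) = V q b N r.-1 by rewrite {1}er V_cons ?drop1 //; lia.
rewrite e1 e2 -!addnA; congr (_ + _); rewrite addnC; congr (_ + _).
apply: eq_big_seq => k; rewrite mem_iota => /andP [hk1 _].
rewrite drop_UV; [| lia |].
  by rewrite Dint_same.
have : b <= k * b by rewrite leq_pmull.
lia.
Qed.


Definition Eterm q b N t :=
  if (q <= t) && (q.+1 * b <= N + b) then g q b (N + b - q.+1 * b) (t - q) else 0.

Lemma V1_heads q b N k : 1 < q -> 0 < b -> 0 < k -> k * b < N.+1 ->
  nth 0 (V q b N 1) (k * b) = k %% q.
Proof.
move=> hq hb hk hkb.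
have h1 : b <= k * b by rewrite leq_pmull.
rewrite nth_UV //; last by apply/eqP; lia.
rewrite U_F // (@F_heads q b 0 (b - 1) (1 + N) k) //; lia.
Qed.

Lemma sub_pref b j Y : j * b <= size Y -> forall s y, y \in Dset b s (drop (j * b) Y) ->
  y \in Dset b (j + s) Y.
Proof.
move=> hj s y hy; apply: (Dset_comp _ hy).
rewrite -{2}(cat_take_drop (j * b) Y); apply: Dset_pref; exact: size_take_le.
Qed.

Lemma base_UV q b N t : 1 < q -> 1 < b -> 0 < t -> t * b <= N.+1 ->
  Dint b t (U q b N 1) (V q b N 1) + g q b N t = g q b N.+1 t + Eterm q b N t.
Proof.
move=> hq hb ht hN.
have hq0 : 0 < q by lia.
have hb0 : 0 < b by lia.
case: (ltngtP (t * b) N.+1) => hN'; last first.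
-
  have hU1 : size (U q b N 1) = t * b by rewrite /U size_cat /= size_F; lia.
  have hV1 : size (V q b N 1) = t * b by rewrite /V size_cat /= size_F; lia.
  rewrite /Dint size_filter_sup; last first.
    move=> y /Dset_size []; rewrite hU1 subnn => _ /size0nil ->.
    by rewrite Dset_nil hV1.
  rewrite size_Dset_eq // g_small; last lia.
  rewrite g_eq // /Eterm; case: ifP => // /andP [hqt hqb].
  rewrite g_small //; rewrite mulSn in hqb; rewrite mulnBl; lia.
- lia.
set Y := F q b 1 0 N.
have eU1 : U q b N 1 = 0 :: Y by [].
have eV1 : V q b N 1 = 1 :: Y by [].
have hU1 : forall k, k <= t -> nth 0 (U q b N 1) (k * b) = (0 + k) %% q.
  move=> k hk; rewrite U_F // (@F_heads q b 0 (b - 1) (1 + N) t) //; lia.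
have hsU : t * b < size (U q b N 1) by rewrite eU1 /= size_F.
have [hS hT] := cyc_mem hq0 hU1 hsU.
set m := minn q t.+1.
have hm2 : 1 < m by rewrite /m leq_min hq; lia.
pose TV k := if k == 0 then (if q <= t then Dset b (t - q) (drop (q * b).+1 (V q b N 1)) else [::])
             else if k == 1 then Dset b t (drop 1 (V q b N 1))
             else Dset b (t - k) (drop (k * b).+1 (V q b N 1)).
pose TT k := [seq y <- Dset b (t - k) (drop (k * b).+1 (U q b N 1)) | y \in TV k].
have memV : forall k y, k < m -> (k :: y \in Dset b t (V q b N 1)) = (y \in TV k).
  move=> k y hk; rewrite /TV.
  case: eqP => [->|/eqP hk0].
    case: ifP => hqt.
      have hqbt : q * b <= t * b by rewrite leq_mul2r hqt orbT.
      have hq' : nth 0 (V q b N 1) (q * b) = 0.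
        rewrite V1_heads ?modnn //; lia.
      rewrite -{1}hq' Dset_first //.
      - have : q * b <= t * b by rewrite leq_mul2r hqt orbT.
        rewrite eV1 /= size_F; lia.
      move=> j hj; rewrite hq'; case: j hj => [|j] hj //.
      rewrite V1_heads ?modn_small //; try lia.
      have : j.+1 * b <= q * b by rewrite leq_mul2r; apply/orP; right; lia.
      have : q * b <= t * b by rewrite leq_mul2r hqt orbT.
      lia.
    rewrite in_nil; apply/negbTE/Dset_none => j hj hjs.
    case: j hj hjs => [|j] hj hjs //.
    rewrite V1_heads ?modn_small //; try lia.
    by move: hjs; rewrite eV1 /= size_F.
  case: eqP => [->|/eqP hk1].
    have -> : 1 = nth 0 (V q b N 1) (0 * b) by [].
    rewrite Dset_first ?subn0 ?mul0n //; rewrite eV1 /=; lia.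
  have hkt : k <= t by lia.
  have hkb : k * b <= t * b by rewrite leq_mul2r hkt orbT.
  have hk' : nth 0 (V q b N 1) (k * b) = k.
    rewrite V1_heads ?modn_small //; lia.
  rewrite -{1}hk' Dset_first //.
  - rewrite eV1 /= size_F; lia.
  move=> j hj; rewrite hk'; case: j hj => [|j] hj; first by rewrite mul0n /=; apply/eqP; lia.
  rewrite V1_heads ?modn_small //; try lia.
  have : j.+1 * b <= k * b by rewrite leq_mul2r; apply/orP; right; lia.
  move: hsU; rewrite eU1 /= size_F; lia.
have uS : uniq (cycS q 0 m) by apply: cycS_uniq; lia.
have hidx : forall k, k < m -> index ((0 + k) %% q) (cycS q 0 m) = k.
  move=> k hk; have := @index_uniq _ 0 k (cycS q 0 m); rewrite size_map size_iota.
  by rewrite (nth_map 0) ?size_iota // nth_iota //; apply.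
have hkq : forall k, k < m -> (0 + k) %% q = k.
  by move=> k hk; rewrite add0n modn_small //; lia.
have eDint : Dint b t (U q b N 1) (V q b N 1) = \sum_(k <- iota 0 m) size (TT k).
  rewrite /Dint (@split_size _ (cycS q 0 m) (fun a => TT (index a (cycS q 0 m)))).
  - rewrite big_map; apply: eq_big_seq => k; rewrite mem_iota /= add0n => hk.
    by rewrite hidx.
  - exact/filter_uniq/Dset_uniq.
  - by rewrite mem_filter negb_and Dset_nonil.
  - exact: uS.
  - by move=> a y; rewrite mem_filter => /andP [_ /hS].
  move=> a /mapP [k]; rewrite mem_iota /= add0n => hk ->; split.
    exact/filter_uniq/Dset_uniq.
  move=> y; rewrite hidx // mem_filter hT // hkq // memV // /TT mem_filter andbC.
  by [].
have eg : g q b N.+1 t = \sum_(k <- iota 0 m) size (Dset b (t - k) (drop (k * b).+1 (U q b N 1))).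
  by rewrite -(size_cyc hq0 hU1 hsU) U_F // fam.
have eio : iota 0 m = 0 :: 1 :: iota 2 m.-1.-1 by case: (m) hm2 => [|[|m']].
rewrite eDint eg eio !big_cons.
have eY : g q b N t = size (Dset b t Y) by rewrite /Y fam.
rewrite eY.
have hYs : size Y = N by rewrite size_F.
have T0 : size (TT 0) = Eterm q b N t.
  rewrite /TT /TV /= /Eterm subn0.
  case: ifP => hqt /=; last by rewrite (@eq_filter _ _ pred0) // filter_pred0.
  have hqb : q * b <= t * b by rewrite leq_mul2r hqt orbT.
  have -> : q.+1 * b <= N + b by rewrite mulSn; lia.
  rewrite size_filter_sub; [| exact: Dset_uniq | exact: Dset_uniq |].
    rewrite drop_F fam //; congr g; rewrite mulSn; lia.
  move=> y hy; rewrite mul0n drop0.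
  have := @sub_pref b q (F q b 1 0 N) _ (t - q) y hy; rewrite subnKC //; apply.
  by rewrite size_F; lia.
have T1 : size (TT 1) = size (Dset b (t - 1) (drop (1 * b).+1 (U q b N 1))).
  rewrite /TT /TV /=; apply: size_filter_sup => y hy; rewrite drop0.
  have := @sub_pref b 1 (F q b 1 0 N) _ (t - 1) y hy; rewrite subnKC //; apply.
  rewrite size_F; have : 1 * b <= t * b by rewrite leq_mul2r ht orbT.
  lia.
have Trest : \sum_(k <- iota 2 m.-1.-1) size (TT k) =
             \sum_(k <- iota 2 m.-1.-1) size (Dset b (t - k) (drop (k * b).+1 (U q b N 1))).
  apply: eq_big_seq => k; rewrite mem_iota => /andP [hk2 _]; rewrite /TT /TV.
  have -> : (k == 0) = false by lia.
  have -> : (k == 1) = false by lia.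
  rewrite drop_UV //; first by rewrite -/(Dint b _ _ _) Dint_same.
rewrite T0 T1 Trest.
have -> : drop (0 * b).+1 (U q b N 1) = Y by rewrite mul0n eU1 /= drop0.
rewrite subn0; lia.
Qed.


Lemma all_UV q b N t r : 1 < q -> 1 < b -> 0 < t -> t * b <= N.+1 -> 0 < r -> r <= b ->
  Dint b t (U q b N r) (V q b N r) + g q b N t = g q b (r + N) t + Eterm q b N t.
Proof.
move=> hq hb ht hN; elim: r => [|r IH] // hr hrb.
case: r IH hr hrb => [|r] IH hr hrb.
  by rewrite base_UV // add1n.
have := @step_UV q b N t r.+2 (ltnW hq) (ltnW hb) isT hrb.
have := IH isT (ltnW hrb).
rewrite /=; lia.
Qed.


End Aux.
Import Aux.

Theorem lemma4p13 (q b t n : nat) :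
  2 <= q -> 2 <= b -> 1 <= t -> (t.+1 * b).-1 <= n ->
  let x := nseq b 0 ++ cycseq 1 (n - b) q b in
  let y := nseq b.-1 0 ++ [:: 1] ++ cycseq 1 (n - b) q b in
  ((Dint b t x y)%:Z =
     (Dmax q b n%:Z t%:Z)%:Z - (Dmax q b (n%:Z - b%:Z) t%:Z)%:Z
     + (Dmax q b (n%:Z - (q.+1 * b)%:Z) (t%:Z - q%:Z))%:Z)%R /\
  ((Nminus q b n t)%:Z >=
     (Dmax q b n%:Z t%:Z)%:Z - (Dmax q b (n%:Z - b%:Z) t%:Z)%:Z
     + (Dmax q b (n%:Z - (q.+1 * b)%:Z) (t%:Z - q%:Z))%:Z)%R.
Proof.
move=> hq hb ht hn x y.
have hq0 : 0 < q by lia.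
have hb0 : 0 < b by lia.
have htb : 1 * b <= t * b by rewrite leq_mul2r ht orbT.
have hbn : b <= n by move: hn; rewrite mulSn; lia.
set N := n - b.
have hN : t * b <= N.+1 by move: hn; rewrite mulSn /N; lia.
have key := @all_UV q b N t b hq hb ht hN hb0 (leqnn b).
have ex : x = U q b N b by [].
have ey : y = V q b N b by [].
have eN : b + N = n by rewrite /N; lia.
rewrite eN in key.
have E1 : Dmax q b n%:Z t%:Z = g q b n t by rewrite Dmax_g.
have E2 : Dmax q b (n%:Z - b%:Z) t%:Z = g q b N t by rewrite subzn // Dmax_g.
have E3 : Dmax q b (n%:Z - (q.+1 * b)%:Z) (t%:Z - q%:Z) = Eterm q b N t.
  rewrite /Eterm; case: (leqP q t) => hqt /=.
    rewrite (subzn hqt); case: (leqP (q.+1 * b) (N + b)) => hqb /=.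
      have hqn : q.+1 * b <= n by lia.
      by rewrite (subzn hqn) Dmax_g //; congr g; lia.
    rewrite /Dmax; have -> : ((t - q)%:Z < 0)%R = false by [].
    have -> : (n%:Z - (q.+1 * b)%:Z < b%:Z * (t - q)%:Z)%R = true.
      apply/idP; rewrite -PoszM; lia.
    by [].
  rewrite /Dmax; have -> : (t%:Z - q%:Z < 0)%R = true by apply/idP; lia.
  by [].
have H1 : ((Dint b t x y)%:Z =
     (Dmax q b n%:Z t%:Z)%:Z - (Dmax q b (n%:Z - b%:Z) t%:Z)%:Z
     + (Dmax q b (n%:Z - (q.+1 * b)%:Z) (t%:Z - q%:Z))%:Z)%R.
  rewrite E1 E2 E3 ex ey; lia.
split => //; rewrite -H1 lez_nat.
have hallY : all (fun z => z < q) (cycseq 1 N q b) by exact: (@F_all q b 1 0 N hq0).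
have hxs : size x = n by rewrite /x size_cat size_nseq /cycseq size_mkseq.
have hys : size y = n by rewrite /y !size_cat size_nseq /cycseq size_mkseq /=; lia.
have hxa : all (fun z => z < q) x.
  by rewrite /x all_cat hallY andbT; apply/allP => z /nseqP [-> _].
have hya : all (fun z => z < q) y.
  rewrite /y !all_cat hallY andbT /= andbT; apply/andP; split; last lia.
  by apply/allP => z /nseqP [-> _].
have [ux hux] := tuple_of_seq hxs hxa.
have [vy hvy] := tuple_of_seq hys hya.
have hxy : ux != vy.
  apply/eqP => e; have : nth 0 x b.-1 = nth 0 y b.-1 by rewrite -hux -hvy e.
  rewrite /x /y !nth_cat !size_nseq.
  have -> : (b.-1 < b) = true by lia.
  rewrite ltnn subnn nth_nseq.
  have -> : (b.-1 < b) = true by lia.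
  by [].
rewrite /Nminus.
apply: leq_trans (leq_bigmax ux).
rewrite -hux -hvy.
exact: (leq_bigmax_cond (P := fun v => ux != v) (F := fun v => Dint b t (map val ux) (map val v)) vy hxy).
Qed.
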